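(* In the setting described in the context, for every $(u_1,\dots,u_n)\in C(U,W,\alpha)$ and every $i\in[n-1]$, we have $[i+1,n]\subseteq\mathrm{fix}_{(\alpha_i,n]}(u_i,u_{i+1})$.
   Context: Permutations: for integers $a\le n$, $S_{[a,n]}$ is the set of bijections of $\mathbb Z$ fixing every integer outside $[a,n]$, one-line notation $[w(a),\dots,w(n)]$; $\tau_{i,j}$ swaps $i<j$, $u\tau_{i,j}=u\circ\tau_{i,j}$; $\ell(u)$ = number of inversions; $u\lessdot_k u\tau_{i,j}$ if $i\le k<j$ and $\ell(u\tau_{i,j})=\ell(u)+1$; $u\xrightarrow{k}w$ if there is a chain $u=v_1\lessdot_k\cdots\lessdot_k v_s=w$ ($s\ge1$), $v_{t+1}=v_t\tau_{i_t,j_t}$, with $v_1(i_1)<\cdots<v_{s-1}(i_{s-1})$. $\mathrm{fix}_I(u,v)=\{u(t):t\in I,\ u(t)=v(t)\}$. For $\beta=(\beta_1,\dots,\beta_m)$, $C(u,w,\beta)$ is the set of $(v_1,\dots,v_{m+1})$ with $v_1=u$, $v_{m+1}=w$, $v_i\xrightarrow{\beta_i}v_{i+1}$. Setting: fix $a\le 0<n$ and let $A=\{(r,c):1\le r\le n,\ a\le c\le r\}$. Let $\gamma=(\gamma_N,\gamma_E,\gamma_S,\gamma_W)$ be a boundary condition of $A$: $\gamma_N(c)$ (for columns $c\in[a,n]$) is the label of the pipe entering through the top edge of the top cell $(\max(c,1),c)$ of column $c$ or $\varnothing$; $\gamma_E(r)$ the label of the pipe entering through the right edge of $(r,r)$ or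 $\varnothing$; $\gamma_S(c)$ the label of the pipe exiting through the bottom edge of $(n,c)$ or $\varnothing$; $\gamma_W(r)$ that of the pipe exiting through the left edge of $(r,a)$ or $\varnothing$. Assume $\gamma_S(c)\ne\varnothing$ for all $c\in[a,n]$, $\gamma_W(r)=\varnothing$ and $\gamma_N(r)\neq\varnothing$ for $r\in[n]$, and the non-$\varnothing$ values of $\gamma_N,\gamma_E$ are exactly $a,\dots,n$, increasing along the order: top edges of columns $a,\dots,1$, right edge of row 1, top edge of column 2, right edge of row 2, …, top edge of column $n$, right edge of row $n$. (The values of $\gamma_S$ are then also exactly $a,\dots,n$.) Put $p_c=\gamma_N(c)$ ($c\in[n]$), $\alpha_i=p_{i+1}-1$, $\alpha=(\alpha_1,\dots,\alpha_{n-1})$. $P_r=\{w\in S_{[a,n]}:w(p_j)=j\ \forall j\in(r,n]\}$; $\iota_r:P_r\to S_{[a,r]}$ deletes the values $r+1,\dots,n$ from one-line notation. $W\in P_1$: $\iota_1(W)(\ell)=\gamma_N^{-1}(\ell)$ for $\ell\in[a,p_1]$ and $\iota_1(W)$ decreasing on $(p_1,1]$. $U\in S_{[a,n]}$: $U(\ell)=\gamma_S^{-1}(\ell)$ for $\ell\in[a,n]$. (Here $\gamma_N^{-1}(\ell)$, $\gamma_S^{-1}(\ell)$ denote the column with that value.) *)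

(* Defs.v *)
From mathcomp Require Import all_boot all_order all_algebra.
Set Implicit Arguments. Unset Strict Implicit. Unset Printing Implicit Defensive.
Import Order.TTheory GRing.Theory Num.Theory.
Local Open Scope ring_scope.

Definition zrange (lo hi : int) : seq int :=
  if lo <= hi then [seq lo + (k%:Z) | k <- iota 0 (absz (hi - lo + 1))] else [::].

Definition in_S (a n : int) (u : int -> int) : Prop :=
  bijective u /\ forall x, (x < a) || (n < x) -> u x = x.

Definition tau (i j : int) (x : int) : int :=
  if x == i then j else if x == j then i else x.
Definition rmul_tau (u : int -> int) (i j : int) : int -> int :=
  fun x => u (tau i j x).

Definition inv_count (lo hi : int) (u : int -> int) : nat :=
  count (fun p : int * int => (p.1 < p.2) && (u p.2 < u p.1))
        [seq (x, y) | x <- zrange lo hi, y <- zrange lo hi].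

(** ell(u) = l : number of inversions, computed on any window containing
    the support of the (finitely supported) permutation u. *)
Definition has_length (u : int -> int) (l : nat) : Prop :=
  exists lo hi, (forall x, (x < lo) || (hi < x) -> u x = x) /\ inv_count lo hi u = l.

Definition kcover (k : int) (u : int -> int) (i j : int) : Prop :=
  (i <= k < j) /\ exists l, has_length u l /\ has_length (rmul_tau u i j) l.+1.

(** v_1 = u <._k v_2 <._k ... <._k v_s = w with v_{t+1} = v_t tau_{i_t,j_t},
    the pairs (i_t, j_t) listed in ps. *)
Fixpoint kchain (k : int) (u : int -> int) (ps : seq (int * int)) (w : int -> int)
  : Prop :=
  match ps with
  | [::] => forall x, u x = w x
  | (i, j) :: ps' => kcover k u i j /\ kchain k (rmul_tau u i j) ps' w
  end.

Fixpoint chain_labels (u : int -> int) (ps : seq (int * int)) : seq int :=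
  match ps with
  | [::] => [::]
  | (i, j) :: ps' => u i :: chain_labels (rmul_tau u i j) ps'
  end.

Definition kpath (k : int) (u w : int -> int) : Prop :=
  exists ps, kchain k u ps w /\ sorted (fun x y : int => x < y) (chain_labels u ps).

(** (v_1, ..., v_{m+1}) in C(u, w, beta), beta = (beta_1, ..., beta_m);
    the tuple is the family vs 1, ..., vs (m+1). *)
Definition inC (u w : int -> int) (beta : int -> int) (m : int)
    (vs : int -> int -> int) : Prop :=
  (forall x, vs 1 x = u x) /\ (forall x, vs (m + 1) x = w x) /\
  (forall i, 1 <= i <= m -> kpath (beta i) (vs i) (vs (i + 1))).

Definition in_fix_oc (lo hi : int) (u v : int -> int) (x : int) : Prop :=
  exists t, (lo < t <= hi) /\ u t = v t /\ u t = x.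

(** Boundary edges: inl c = top edge of column c, inr r = right edge of row r. *)
Definition edge_order (a n : int) : seq (int + int) :=
  [seq (inl c : int + int) | c <- zrange a 1] ++
  (inr 1 : int + int) :: flatten [seq [:: (inl c : int + int); inr c] | c <- zrange 2 n].

Definition edge_label (gN gE : int -> option int) (e : int + int) : option int :=
  match e with inl c => gN c | inr r => gE r end.

(** The standing assumptions on the boundary condition gamma = (gN, gE, gS, gW)
    (gS is total: gamma_S(c) <> empty for every column c). *)
Definition boundary_setting (a n : int) (gN gE : int -> option int)
    (gS : int -> int) (gW : int -> option int) : Prop :=
  (forall c, a <= c <= n -> a <= gS c <= n) /\
  (forall c c', a <= c <= n -> a <= c' <= n -> gS c = gS c' -> c = c') /\
  (forall r, 1 <= r <= n -> gW r = None) /\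
  (forall r, 1 <= r <= n -> gN r != None) /\
  pmap (edge_label gN gE) (edge_order a n) = zrange a n.

Definition pcol (gN : int -> option int) (c : int) : int := odflt 0 (gN c).
Definition alpha (gN : int -> option int) (i : int) : int := pcol gN (i + 1) - 1.

(** iota_r(w): delete the values r+1..n from [w(a), ..., w(n)]; result in S_[a,r]. *)
Definition iota_r (a n r : int) (w : int -> int) : int -> int :=
  fun l => if (a <= l) && (l <= r)
           then nth 0 [seq w x | x <- zrange a n & w x <= r] (absz (l - a))
           else l.

Definition is_W (a n : int) (gN : int -> option int) (W : int -> int) : Prop :=
  in_S a n W /\
  (forall j, 1 < j <= n -> W (pcol gN j) = j) /\
  (forall l, a <= l <= pcol gN 1 ->
     a <= iota_r a n 1 W l <= n /\ gN (iota_r a n 1 W l) = Some l) /\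
  (forall x y, pcol gN 1 < x -> x < y -> y <= 1 ->
     iota_r a n 1 W y < iota_r a n 1 W x).

Definition is_U (a n : int) (gS : int -> int) (U : int -> int) : Prop :=
  in_S a n U /\
  (forall l, a <= l <= n -> a <= U l <= n /\ gS (U l) = l).

(* Main.v *)
Require Import Defs.
From mathcomp Require Import all_boot all_order all_algebra.
From mathcomp Require Import zify.
Import Order.TTheory GRing.Theory Num.Theory.
Local Open Scope ring_scope.

Set Implicit Arguments. Unset Strict Implicit.

Lemma mem_zrange lo hi x : (x \in zrange lo hi) = (lo <= x <= hi).
Proof.
rewrite /zrange; case: ifP => H.
  apply/mapP/idP.
    case=> k; rewrite mem_iota => /andP[_ Hk] ->; lia.
  move=> Hx; exists (absz (x - lo)); last by lia.
  rewrite mem_iota; lia.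
by rewrite in_nil; lia.
Qed.

Lemma uniq_zrange lo hi : uniq (zrange lo hi).
Proof.
rewrite /zrange; case: ifP => // _.
rewrite map_inj_uniq ?iota_uniq // => k1 k2 /= H; lia.
Qed.

Lemma count_sum (T : eqType) (p : pred T) s : count p s = (\sum_(x <- s) p x)%N.
Proof. by elim: s => [|x s IH]; rewrite ?big_nil ?big_cons //= IH. Qed.

Definition G (u : int -> int) (x y : int) : nat := ((x < y) && (u y < u x)).



Lemma count_allpairs (p : pred (int * int)) s t :
  count p [seq (x, y) | x <- s, y <- t] = (\sum_(x <- s) \sum_(y <- t) p (x, y))%N.
Proof.
elim: s => [|x s IH]; first by rewrite big_nil.
by rewrite allpairs_cons count_cat IH big_cons count_map count_sum.
Qed.

Lemma inv_count_sum lo hi u : inv_count lo hi u =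
  (\sum_(x <- zrange lo hi) \sum_(y <- zrange lo hi) G u x y)%N.
Proof. by rewrite /inv_count count_allpairs. Qed.

Lemma maps_into (u : int -> int) lo hi : injective u ->
  (forall x, (x < lo) || (hi < x) -> u x = x) ->
  forall x, lo <= x <= hi -> lo <= u x <= hi.
Proof.
move=> Hinj Hfix x Hx; case: (boolP (lo <= u x <= hi)) => // H.
have : u (u x) = u x by apply: Hfix; lia.
by move/Hinj => E; move: H; rewrite E Hx.
Qed.

Lemma sum_filter2 (s r : seq int) (P : pred int) (F : int -> int -> nat) :
  uniq s -> uniq r -> (forall x, (x \in r) = (x \in s) && P x) ->
  (forall x y, F x y != 0%N -> P x && P y) ->
  (\sum_(x <- s) \sum_(y <- s) F x y = \sum_(x <- r) \sum_(y <- r) F x y)%N.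
Proof.
move=> us ur Hr HF.
have pe : perm_eq r (filter P s).
  apply: uniq_perm => //; first by rewrite filter_uniq.
  by move=> x; rewrite Hr mem_filter andbC.
rewrite (perm_big _ pe) big_filter /= [RHS]big_mkcond /=.
apply: eq_bigr => x _.
case Px: (P x).
  rewrite (perm_big _ pe) big_filter /= [RHS]big_mkcond /=.
  apply: eq_bigr => y _; case Py: (P y) => //.
  by case: (eqVneq (F x y) 0%N) => // /HF; rewrite Py andbF.
rewrite big1 // => y _; case: (eqVneq (F x y) 0%N) => // /HF; by rewrite Px.
Qed.

Lemma inv_window (u : int -> int) lo hi L H : injective u ->
  (forall x, (x < lo) || (hi < x) -> u x = x) -> L <= lo -> hi <= H ->
  inv_count L H u = inv_count lo hi u.
Proof.
move=> Hinj Hfix HL HH; rewrite !inv_count_sum.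
apply: (@sum_filter2 _ _ (fun x => lo <= x <= hi)); rewrite ?uniq_zrange //.
  by move=> x; rewrite !mem_zrange; lia.
move=> x y; rewrite /G.
have Mi := maps_into Hinj Hfix.
case: (boolP (lo <= x <= hi)) => Hx; case: (boolP (lo <= y <= hi)) => Hy //=.
- have := Hfix y; have := Mi x Hx; lia.
- have := Hfix x; have := Mi y Hy; lia.
- have := Hfix x; have := Hfix y; lia.
Qed.


Lemma sum2 (s : seq int) i j (F : int -> nat) : uniq s -> i \in s -> j \in s -> i != j ->
  (\sum_(x <- s) F x = F i + F j + \sum_(x <- rem j (rem i s)) F x)%N.
Proof.
move=> us Hi Hj Hij.
rewrite (big_rem i Hi) /= (big_rem j) ?addnA //.
by rewrite (mem_rem_uniq _ us) inE eq_sym Hij.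
Qed.

Lemma swap_dec (s : seq int) u i j : uniq s -> i \in s -> j \in s -> i < j -> u j < u i ->
  (\sum_(x <- s) \sum_(y <- s) G (rmul_tau u i j) x y <
   \sum_(x <- s) \sum_(y <- s) G u x y)%N.
Proof.
move=> us Hi Hj Hlt Hu.
have Hij : i != j by rewrite lt_eqF.
set r := rem j (rem i s).
have Hr : forall z, z \in r -> (z != i) && (z != j).
  move=> z; rewrite /r (mem_rem_uniq _ (rem_uniq _ us)) inE => /andP[-> ].
  by rewrite (mem_rem_uniq _ us) inE => /andP[-> _].
set v := rmul_tau u i j.
have vi : v i = u j by rewrite /v /rmul_tau /tau eqxx.
have vj : v j = u i by rewrite /v /rmul_tau /tau eqxx eq_sym (negbTE Hij).
have vz : forall z, z \in r -> v z = u z.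
  by move=> z /Hr /andP[Zi Zj]; rewrite /v /rmul_tau /tau (negbTE Zi) (negbTE Zj).
under eq_bigr => x _ do rewrite (sum2 _ us Hi Hj Hij).
under [X in (_ < X)%N]eq_bigr => x _ do rewrite (sum2 _ us Hi Hj Hij).
rewrite !big_split /= !(sum2 _ us Hi Hj Hij).
have Gd : forall w x, G w x x = 0%N by move=> w x; rewrite /G ltxx.
have E1 : (\sum_(x <- r) \sum_(y <- r) G v x y = \sum_(x <- r) \sum_(y <- r) G u x y)%N.
  rewrite big_seq [RHS]big_seq; apply: eq_bigr => x Hx.
  rewrite big_seq [RHS]big_seq; apply: eq_bigr => y Hy.
  by rewrite /G vz ?vz.
have E2 : G v i j = 0%N by rewrite /G vi vj Hlt /=; lia.
have E3 : G u i j = 1%N by rewrite /G Hlt Hu.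
have E4 : forall w, G w j i = 0%N by move=> w; rewrite /G; lia.
have E5 : (\sum_(z <- r) G v z i + \sum_(z <- r) G v z j + \sum_(z <- r) G v i z + \sum_(z <- r) G v j z <=
   \sum_(z <- r) G u z i + \sum_(z <- r) G u z j + \sum_(z <- r) G u i z + \sum_(z <- r) G u j z)%N.
  rewrite -!big_split /= big_seq [X in (_ <= X)%N]big_seq; apply: leq_sum => z Hz.
  rewrite /G vi vj vz //.
  lia.
rewrite !Gd E2 E3 !E4 E1.
rewrite -/r.
set v0 := (\sum_(z <- r) G v z i)%N in E5 *.
set v1 := (\sum_(z <- r) G v z j)%N in E5 *.
set v2 := (\sum_(z <- r) G v i z)%N in E5 *.
set v3 := (\sum_(z <- r) G v j z)%N in E5 *.
set u0 := (\sum_(z <- r) G u z i)%N in E5 *.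
set u1 := (\sum_(z <- r) G u z j)%N in E5 *.
set u2 := (\sum_(z <- r) G u i z)%N in E5 *.
set u3 := (\sum_(z <- r) G u j z)%N in E5 *.
set dd := (\sum_(x <- r) \sum_(y <- r) G u x y)%N. lia.
Qed.


Lemma tauK i j x : tau i j (tau i j x) = x.
Proof.
rewrite /tau; case: (eqVneq x i) => [->|Hi]; first by rewrite eqxx; case: eqVneq.
case: (eqVneq x j) => [->|Hj]; first by rewrite eqxx.
by rewrite (negbTE Hi) (negbTE Hj).
Qed.

Lemma rmul_inj u i j : injective u -> injective (rmul_tau u i j).
Proof. by move=> Hu x y /Hu H; rewrite -(tauK i j x) H tauK. Qed.

Lemma rmul_surj u i j : (forall y, exists x, u x = y) ->
  forall y, exists x, rmul_tau u i j x = y.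
Proof. by move=> Hu y; case: (Hu y) => x Hx; exists (tau i j x); rewrite /rmul_tau tauK. Qed.

Lemma kcover_lt k u i j : injective u -> kcover k u i j -> u i < u j.
Proof.
move=> Hinj [Hk [l [[lo1 [hi1 [F1 C1]]] [lo2 [hi2 [F2 C2]]]]]].
set v := rmul_tau u i j in F2 C2.
have vinj : injective v by apply: rmul_inj.
have vi : v i = u j by rewrite /v /rmul_tau /tau eqxx.
have Hij : i != j by rewrite lt_eqF //; lia.
have vj : v j = u i by rewrite /v /rmul_tau /tau eqxx eq_sym (negbTE Hij).
set L := Num.min lo1 lo2.
set H := Num.max hi1 hi2.
have HL1 : L <= lo1 by rewrite ge_min lexx.
have HL2 : L <= lo2 by rewrite ge_min lexx orbT.
have HH1 : hi1 <= H by rewrite le_max lexx.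
have HH2 : hi2 <= H by rewrite le_max lexx orbT.
have E1 := inv_window Hinj F1 HL1 HH1.
have E2 := inv_window vinj F2 HL2 HH2.
case: (ltP (u i) (u j)) => // Hle.
have Hne : u j != u i by apply/eqP => /Hinj /eqP; rewrite eq_sym (negbTE Hij).
have Hlt : u j < u i by rewrite lt_neqAle Hne Hle.
have Hi : i \in zrange L H.
  rewrite mem_zrange; case: (boolP (L <= i <= H)) => // Hout.
  have := F1 i; have := F2 i; rewrite vi => A B.
  move: Hne; rewrite A ?B //; lia.
have Hj : j \in zrange L H.
  rewrite mem_zrange; case: (boolP (L <= j <= H)) => // Hout.
  have := F1 j; have := F2 j; rewrite vj => A B.
  move: Hne; rewrite -A ?B //; lia.
have := swap_dec (u:=u) (uniq_zrange L H) Hi Hj (ltac:(lia)) Hlt.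
rewrite -!inv_count_sum E1 E2 C1 C2; lia.
Qed.


Definition surj (u : int -> int) := forall y, exists x, u x = y.

Lemma kchain_props k ps : forall u w, injective u -> surj u -> kchain k u ps w ->
  [/\ injective w, surj w, (forall t, t <= k -> u t <= w t) &
      (forall t, k < t -> w t <= u t)].
Proof.
elim: ps => [|[i j] ps IH] u w Hi Hs /=.
  move=> E; split.
  - by move=> x y; rewrite -!E; apply: Hi.
  - by move=> y; case: (Hs y) => x Hx; exists x; rewrite -E.
  - by move=> t _; rewrite E.
  - by move=> t _; rewrite E.
case=> Hc Hch.
have Hlt := kcover_lt Hi Hc.
case: Hc => Hk _.
have [A B C D] := IH _ _ (rmul_inj (i:=i) (j:=j) Hi) (rmul_surj i j Hs) Hch.
split => // t Ht.
- apply: le_trans (C t Ht).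
  rewrite /rmul_tau /tau; case: (eqVneq t i) => [->|Hti]; first by apply: ltW.
  case: (eqVneq t j) => [Etj|_]; [lia | by []].
- apply: le_trans (D t Ht) _.
  rewrite /rmul_tau /tau; case: (eqVneq t i) => [Eti|Hti]; first lia.
  case: (eqVneq t j) => [->|_]; [by apply: ltW | by []].
Qed.

Lemma kpath_props k u w : injective u -> surj u -> kpath k u w ->
  [/\ injective w, surj w, (forall t, t <= k -> u t <= w t) &
      (forall t, k < t -> w t <= u t)].
Proof. by move=> Hi Hs [ps [Hch _]]; apply: kchain_props Hch. Qed.


Lemma zrange_split lo m hi : lo <= m <= hi ->
  zrange lo hi = zrange lo m ++ zrange (m + 1) hi.
Proof.
move=> Hm; rewrite /zrange.
have -> : lo <= hi by lia.
have -> : lo <= m by lia.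
have -> : absz (hi - lo + 1) = addn (absz (m - lo + 1)) (absz (hi - (m + 1) + 1)) by lia.
rewrite iotaD map_cat; congr (_ ++ _).
case: ifP => H2.
  rewrite add0n -[X in iota X _]addn0 iotaDl -map_comp; apply: eq_map => k /=; lia.
by have -> : absz (hi - (m + 1) + 1) = 0%N by lia.
Qed.

Lemma sorted_zrange lo hi : sorted (fun x y : int => x < y) (zrange lo hi).
Proof.
rewrite /zrange; case: ifP => // _.
rewrite sorted_map; apply: sub_sorted (iota_ltn_sorted 0 _) => x y /=; lia.
Qed.

Lemma sorted_cat_lt (s1 s2 : seq int) x y :
  sorted (fun x y : int => x < y) (s1 ++ s2) -> x \in s1 -> y \in s2 -> x < y.
Proof.
move=> Hs Hx Hy.
have Hsub : subseq [:: x; y] (s1 ++ s2).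
  by rewrite -cat1s; apply: cat_subseq; rewrite sub1seq.
have := subseq_sorted (@lt_trans _ _) Hsub Hs.
by rewrite /= andbT.
Qed.

Lemma pN_some a n gN gE gS gW : boundary_setting a n gN gE gS gW ->
  forall c, 1 <= c <= n -> gN c = Some (pcol gN c).
Proof.
case=> _ [_ [_ [HN _]]] c Hc; have := HN c Hc.
by rewrite /pcol; case: (gN c).
Qed.

Lemma inl_mem lo n c : lo <= c <= n -> (inl c : int + int) \in
  flatten [seq [:: (inl c : int + int); inr c] | c <- zrange lo n].
Proof.
move=> Hc; apply/flattenP; exists [:: (inl c : int + int); inr c].
  by apply: map_f; rewrite mem_zrange.
by rewrite inE eqxx.
Qed.

Lemma p_range a n gN gE gS gW : boundary_setting a n gN gE gS gW ->
  forall c, 2 <= c <= n -> a <= pcol gN c <= n.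
Proof.
move=> Hb c Hc; have Hs := pN_some Hb (ltac:(lia) : 1 <= c <= n).
case: Hb => _ [_ [_ [_ Hp]]].
rewrite -mem_zrange -Hp mem_pmap.
have <- : edge_label gN gE (inl c) = Some (pcol gN c) by [].
apply: map_f; rewrite /edge_order mem_cat; apply/orP; right.
by rewrite inE (inl_mem Hc) orbT.
Qed.

Lemma p_mono a n gN gE gS gW : boundary_setting a n gN gE gS gW ->
  forall c c', 2 <= c -> c < c' -> c' <= n -> pcol gN c < pcol gN c'.
Proof.
move=> Hb c c' H1 H2 H3.
have Hs := pN_some Hb (ltac:(lia) : 1 <= c <= n).
have Hs' := pN_some Hb (ltac:(lia) : 1 <= c' <= n).
have Hsort := sorted_zrange a n.
case: Hb => _ [_ [_ [_ Hp]]].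
rewrite -Hp /edge_order (zrange_split (ltac:(lia) : 2 <= c <= n)) map_cat flatten_cat in Hsort.
rewrite -cat_cons catA !pmap_cat -pmap_cat in Hsort.
apply: (sorted_cat_lt Hsort).
  rewrite mem_pmap.
  have <- : edge_label gN gE (inl c) = Some (pcol gN c) by [].
  apply: map_f; rewrite mem_cat; apply/orP; right.
  by rewrite inE (inl_mem (ltac:(lia) : 2 <= c <= c)) orbT.
rewrite mem_pmap.
have <- : edge_label gN gE (inl c') = Some (pcol gN c') by [].
by apply: map_f; apply: inl_mem; lia.
Qed.

Unset Implicit Arguments.

Theorem lemma4p14 (a n : int) (gN gE gW : int -> option int) (gS : int -> int)
    (U W : int -> int) (us : int -> int -> int) :
  a <= 0 -> 0 < n ->
  boundary_setting a n gN gE gS gW ->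
  is_U a n gS U -> is_W a n gN W ->
  inC U W (alpha gN) (n - 1) us ->
  forall i, 1 <= i <= n - 1 ->
  forall x, i + 1 <= x <= n -> in_fix_oc (alpha gN i) n (us i) (us (i + 1)) x.
Proof.
move=> Ha Hn Hb [[Ubij Ufix] Urng] [[Wbij Wfix] [Wp _]] [C1 [Cn Cstep]] i Hi x Hx.
have Uinj : injective U by apply: bij_inj.
have Winj : injective W by apply: bij_inj.
have Usurj : surj U by case: Ubij => g _ c2 y; exists (g y); rewrite c2.
have Wn : forall t, us n t = W t.
  by move=> t; rewrite -Cn; congr (us _ t); lia.
have prange := p_range Hb.
have pmono : forall c c', 2 <= c -> c <= c' -> c' <= n -> pcol gN c <= pcol gN c'.
  move=> c c' H1 H2 H3; case: (eqVneq c c') => [->//|Hne].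
  by apply: ltW; apply: (p_mono Hb) => //; rewrite lt_neqAle Hne.
have IS : forall m, 1 <= m <= n -> injective (us m) /\ surj (us m).
  suff H : forall d : nat, 1 + d%:Z <= n -> injective (us (1 + d%:Z)) /\ surj (us (1 + d%:Z)).
    move=> m Hm; have := H (absz (m - 1)) (ltac:(lia)).
    by have -> : 1 + (absz (m - 1))%:Z = m by lia.
  elim=> [|d IH] Hd.
    rewrite addr0; split.
      by move=> y z; rewrite !C1; apply: Uinj.
    by move=> y; case: (Usurj y) => z Hz; exists z; rewrite C1.
  have [H1 H2] := IH (ltac:(lia)).
  have [A B _ _] := kpath_props H1 H2 (Cstep (1 + d%:Z) (ltac:(lia))).
  by have -> : 1 + d.+1%:Z = 1 + d%:Z + 1 by lia.
have step : forall m, 1 <= m <= n - 1 ->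
    (forall t, t <= alpha gN m -> us m t <= us (m + 1) t) /\
    (forall t, alpha gN m < t -> us (m + 1) t <= us m t).
  move=> m Hm; have [H1 H2] := IS m (ltac:(lia)).
  by have [_ _ A B] := kpath_props H1 H2 (Cstep _ Hm).
have left_mono : forall m m2 t, 1 <= m -> m <= m2 -> m2 <= n ->
    (forall m' : int, m <= m' -> m' < m2 -> t <= alpha gN m') -> us m t <= us m2 t.
  move=> m m2 t H1 H2 H3 Ht.
  suff H : forall d : nat, m + d%:Z <= m2 -> us m t <= us (m + d%:Z) t.
    by have := H (absz (m2 - m)) (ltac:(lia)); have -> : m + (absz (m2 - m))%:Z = m2 by lia.
  elim=> [|d IH] Hd; first by rewrite addr0.
  apply: le_trans (IH (ltac:(lia))) _.
  have -> : m + d.+1%:Z = m + d%:Z + 1 by lia.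
  by apply: (step (m + d%:Z) (ltac:(lia))).1; apply: Ht; lia.
have right_mono : forall m m2 t, 1 <= m -> m <= m2 -> m2 <= n ->
    (forall m' : int, m <= m' -> m' < m2 -> alpha gN m' < t) -> us m2 t <= us m t.
  move=> m m2 t H1 H2 H3 Ht.
  suff H : forall d : nat, m + d%:Z <= m2 -> us (m + d%:Z) t <= us m t.
    by have := H (absz (m2 - m)) (ltac:(lia)); have -> : m + (absz (m2 - m))%:Z = m2 by lia.
  elim=> [|d IH] Hd; first by rewrite addr0.
  apply: le_trans (IH (ltac:(lia))).
  have -> : m + d.+1%:Z = m + d%:Z + 1 by lia.
  by apply: (step (m + d%:Z) (ltac:(lia))).2; apply: Ht; lia.
set m := i + 1.
have Hm : 2 <= m <= n by lia.
have pm := prange m Hm.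
have HG : forall t, m <= us m t -> pcol gN m <= t.
  move=> t Ht; case: (leP (pcol gN m) t) => // Hlt; exfalso.
  have := left_mono m n t (ltac:(lia)) (ltac:(lia)) (lexx _).
  have Hal : forall m' : int, m <= m' -> m' < n -> t <= alpha gN m'.
    move=> m' A B; rewrite /alpha; have := pmono m (m' + 1) (ltac:(lia)) (ltac:(lia)) (ltac:(lia)).
set q := pcol gN (m' + 1).
lia.
  move=> /(_ Hal); rewrite Wn => HW.
  have Ht2 : a <= t.
    case: (leP a t) => // Hta; have := Wfix t; lia.
  have := maps_into Winj Wfix (ltac:(lia) : a <= t <= n) => HWr.
  have := Wp (W t) (ltac:(lia)) => /Winj Et.
  have := pmono m (W t) (ltac:(lia)) (ltac:(lia)) (ltac:(lia)); lia.
have HB : forall t, n < t -> us m t = t.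
  move=> t Ht; apply/eqP; rewrite eq_le; apply/andP; split.
    have := right_mono 1 m t (lexx _) (ltac:(lia)) (ltac:(lia)).
    rewrite C1 Ufix ?(ltac:(lia) : (t < a) || (n < t)) //; apply => m' A B.
    rewrite /alpha; have := prange (m' + 1) (ltac:(lia)); lia.
  have := right_mono m n t (ltac:(lia)) (ltac:(lia)) (lexx _).
  rewrite Wn Wfix ?(ltac:(lia) : (t < a) || (n < t)) //; apply => m' A B.
  rewrite /alpha; have := prange (m' + 1) (ltac:(lia)); lia.
have HR : forall t, pcol gN m <= t -> us i t <= U t /\ us m t <= us i t.
  move=> t Ht; split.
    rewrite -C1; apply: right_mono; try lia.
    move=> m' A B; rewrite /alpha; have := pmono (m' + 1) m (ltac:(lia)) (ltac:(lia)) (ltac:(lia)); lia.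
  by apply: (step i Hi).2; rewrite /alpha -/m; lia.
have [Iinj Isurj] := IS i (ltac:(lia)).
have [Minj Msurj] := IS m (ltac:(lia)).
have Hsig : forall d : nat, forall t, us m t = n - d%:Z -> m <= n - d%:Z -> us i t = us m t.
  elim/ltn_ind=> d IH t Ht Hdm.
  have Hpt := HG t (ltac:(lia)).
  have Htn : t <= n by case: (leP t n) => // H; have := HB t H; lia.
  have [R1 R2] := HR t Hpt.
  have := maps_into Uinj Ufix (ltac:(lia) : a <= t <= n) => HUr.
  apply/eqP; rewrite eq_le R2 andbT; case: (leP (us i t) (us m t)) => // Hgt.
  case: (Msurj (us i t)) => t' Ht'.
  have := IH (absz (n - us i t)) (ltac:(lia)) t'.
  have -> : n - (absz (n - us i t))%:Z = us i t by lia.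
  move=> /(_ Ht' (ltac:(lia))); rewrite Ht' => /Iinj Et; move: Ht'; rewrite Et; lia.
case: (Msurj x) => t Ht.
have Hpt := HG t (ltac:(lia)).
have Htn : t <= n by case: (leP t n) => // H; have := HB t H; lia.
exists t; split; first by rewrite /alpha -/m; lia.
have := Hsig (absz (n - x)) t (ltac:(lia)) (ltac:(lia)).
rewrite -/m Ht => ->; by [].
Qed.
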